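(* Let $\beta\in(\frac{1+\sqrt5}{2},2)$. If the quasi-greedy orbit of $1$ hits $\beta^{-1}(\beta-1)^{-1}$ for the first time (there is a minimal $k\ge1$ with $Q^k(1)=\beta^{-1}(\beta-1)^{-1}$ and $Q^i(1)\notin[\beta^{-1},\beta^{-1}(\beta-1)^{-1}]$ for $1\le i<k$), then $\widetilde U_\beta$ is a subshift of finite type.
   Context: $\widetilde U_\beta\subseteq\{0,1\}^{\mathbb{N}}$ is the set of sequences $(a_n)$ that are the unique $\beta$-expansion (sequence with $x=\sum a_n\beta^{-n}$) of the number they represent. The quasi-greedy expansion $(\eta_i)$ of $1$ equals the greedy $\beta$-expansion of $1$ (generated by $G(x)=\beta x\bmod1$ on $[0,1)$, $G(x)=\beta x-1$ on $[1,(\beta-1)^{-1}]$) if that is infinite; if the greedy expansion is $a_1\cdots a_n0^\infty$ with $a_n=1$, then $(\eta_i)=(a_1\cdots a_{n-1}(a_n-1))^\infty$. The quasi-greedy orbit of $1$ is $Q^i(1)=\sum_{j\ge1}\eta_{i+j}\beta^{-j}$, $i\ge1$. A subshift of finite type is a set of all sequences avoiding some finite set of forbidden words. *)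

(* Defs.v *)
From Stdlib Require Import Reals Lra Lia List Arith.
Open Scope R_scope.

(* Sequences in {0,1}^N are represented as nat -> bool, 0-indexed:
   a 0 is the first digit a_1 of the paper. *)
Definition digR (b : bool) : R := if b then 1 else 0.

Definition bval (beta : R) (a : nat -> bool) (x : R) : Prop :=
  infinite_sum (fun n => digR (a n) / beta ^ (S n)) x.

Definition Ubeta (beta : R) (a : nat -> bool) : Prop :=
  exists x, bval beta a x /\
    forall b : nat -> bool, bval beta b x -> forall n, b n = a n.

Definition occurs_at (w : list bool) (a : nat -> bool) (k : nat) : Prop :=
  forall i, (i < length w)%nat -> a (k + i)%nat = nth i w false.

Definition is_SFT (S : (nat -> bool) -> Prop) : Prop :=
  exists F : list (list bool),
    forall a, S a <-> (forall w, In w F -> forall k, ~ occurs_at w a k).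

Definition Gmap (beta x : R) : R :=
  if Rlt_dec x 1 then frac_part (beta * x) else beta * x - 1.

(* digit produced by G at y: floor(beta y) on [0,1) (which is 0 or 1), and 1 on [1, ...] *)
Definition greedy_digit (beta y : R) : bool :=
  if Rlt_dec y 1 then (if Rle_dec 1 (beta * y) then true else false) else true.

Definition greedy1 (beta : R) (n : nat) : bool :=
  greedy_digit beta (Nat.iter n (Gmap beta) 1).

Definition quasi_greedy1 (beta : R) (eta : nat -> bool) : Prop :=
  ((forall N, exists n, (N <= n)%nat /\ greedy1 beta n = true) /\
     forall k, eta k = greedy1 beta k)
  \/
  (exists m : nat, greedy1 beta m = true /\
     (forall j, (m < j)%nat -> greedy1 beta j = false) /\
     forall k, eta k = (if Nat.eqb (k mod (S m)) m then false
                        else greedy1 beta (k mod (S m)))).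

(* Q^i(1) = sum_{j>=1} eta_{i+j} beta^{-j} *)
Definition Qorb (beta : R) (eta : nat -> bool) (i : nat) (q : R) : Prop :=
  bval beta (fun j => eta (i + j)%nat) q.

(* Main.v *)
Require Import Defs.
From Stdlib Require Import Reals Lra Lia List Arith Classical ClassicalEpsilon FunctionalExtensionality.
Open Scope R_scope.

Lemma digR_bounds x : 0 <= digR x <= 1.
Proof. destruct x; simpl; lra. Qed.

Lemma exV b c : exists x, 1 < b -> bval b c x.
Proof.
  destruct (classic (1 < b)) as [Hb|Hb]; [|exists 0; tauto].
  assert (Hb0 : 0 < b) by lra.
  destruct (Rseries_CV_comp (fun n => digR (c n) / b ^ (S n)) (fun n => 1 * (/b)^n)) as [x Hx].
  - intro n. split.
    + apply Rmult_le_pos; [apply digR_bounds|]. left; apply Rinv_0_lt_compat, pow_lt; lra.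
    + rewrite Rmult_1_l, pow_inv. unfold Rdiv.
      assert (H1 : / b ^ S n <= / b ^ n).
      { apply Rinv_le_contravar; [apply pow_lt; lra|]. simpl.
        assert (0 < b ^ n) by (apply pow_lt; lra). nra. }
      assert (0 <= / b ^ S n) by (left; apply Rinv_0_lt_compat, pow_lt; lra).
      pose proof (digR_bounds (c n)). nra.
  - exists (/ (1 - /b)). apply GP_infinite.
    rewrite Rabs_right; [|left; apply Rinv_0_lt_compat; lra].
    rewrite <- Rinv_1. apply Rinv_lt_contravar; lra.
  - exists x. intros _. exact Hx.
Qed.

Definition V b c : R := proj1_sig (constructive_indefinite_description _ (exV b c)).

Lemma V_spec b c : 1 < b -> bval b c (V b c).
Proof. unfold V. destruct (constructive_indefinite_description _ _) as [x Hx]. simpl. auto. Qed.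

Lemma bval_V b c x : 1 < b -> bval b c x -> x = V b c.
Proof. intros Hb H. eapply uniqueness_sum; [exact H| apply V_spec; auto]. Qed.

Definition shift (c : nat -> bool) (i : nat) : nat -> bool := fun n => c (i + n)%nat.

Lemma cv_S (U : nat -> R) l : Un_cv (fun n => U (S n)) l -> Un_cv U l.
Proof.
  intros H eps He. destruct (H eps He) as [N HN]. exists (S N). intros n Hn.
  destruct n as [|n]; [lia|]. apply HN. lia.
Qed.

Lemma V_step b c : 1 < b -> V b c = (digR (c 0%nat) + V b (shift c 1)) / b.
Proof.
  intros Hb. symmetry. apply bval_V; auto.
  pose proof (V_spec b (shift c 1) Hb) as Hs.
  unfold bval in *. apply cv_S.
  assert (E : forall n, sum_f_R0 (fun n => digR (c n) / b ^ S n) (S n)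
      = digR (c 0%nat) / b + / b * sum_f_R0 (fun n => digR (shift c 1 n) / b ^ S n) n).
  { intro n. rewrite decomp_sum by lia. simpl pred. rewrite scal_sum. f_equal.
    - simpl. field. lra.
    - apply sum_eq. intros i _. unfold shift. simpl. field. repeat split; try lra.
      apply pow_nonzero; lra. }
  assert (Hc : Un_cv (fun _ : nat => digR (c 0%nat) / b) (digR (c 0%nat) / b)).
  { intros e He'. exists 0%nat. intros. unfold R_dist. rewrite Rminus_diag, Rabs_R0. lra. }
  assert (Hi : Un_cv (fun _ : nat => / b) (/ b)).
  { intros e He'. exists 0%nat. intros. unfold R_dist. rewrite Rminus_diag, Rabs_R0. lra. }
  pose proof (CV_plus _ _ _ _ Hc (CV_mult _ _ _ _ Hi Hs)) as Hcv.
  intros eps He. destruct (Hcv eps He) as [N HN].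
  exists N. intros n Hn. rewrite E.
  replace ((digR (c 0%nat) + V b (shift c 1)) / b) with (digR (c 0%nat) / b + / b * V b (shift c 1)) by (field; lra).
  apply HN; auto.
Qed.

Lemma shift_shift c i j : shift (shift c i) j = shift c (i + j).
Proof. apply functional_extensionality. intro n. unfold shift. f_equal. lia. Qed.

Lemma shift0 c : shift c 0 = c.
Proof. apply functional_extensionality. intro n. reflexivity. Qed.

Lemma V_shift b c n : 1 < b ->
  V b (shift c n) = (digR (c n) + V b (shift c (S n))) / b.
Proof.
  intros Hb. rewrite V_step by auto. rewrite shift_shift.
  unfold shift at 1. rewrite Nat.add_0_r. replace (n+1)%nat with (S n) by lia. reflexivity.
Qed.


Lemma divb b x a : 1 < b -> x = a / b -> b * x = a.
Proof. intros Hb ->. field. lra. Qed.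

Definition ones : nat -> bool := fun _ => true.
Definition zeros : nat -> bool := fun _ => false.
Definition negs (c : nat -> bool) : nat -> bool := fun n => negb (c n).

Lemma V_zeros b : 1 < b -> V b zeros = 0.
Proof. intros Hb. pose proof (V_step b zeros Hb) as H. change (shift zeros 1) with zeros in H.
  simpl in H. apply divb in H; auto. nra. Qed.

Lemma V_ones b : 1 < b -> V b ones = / (b - 1).
Proof. intros Hb. pose proof (V_step b ones Hb) as H. change (shift ones 1) with ones in H.
  simpl in H. apply divb in H; auto.
  apply (Rmult_eq_reg_r (b-1)); [|lra]. rewrite Rinv_l by lra. lra. Qed.

Lemma V_bounds b c : 1 < b -> 0 <= V b c <= / (b - 1).
Proof.
  intros Hb. rewrite <- V_zeros with (b:=b) by auto. rewrite <- V_ones with (b:=b) by auto.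
  split; eapply Rle_cv_lim; try apply V_spec; auto; intro n; apply sum_Rle; intros i _;
  unfold Rdiv; apply Rmult_le_compat_r; try (left; apply Rinv_0_lt_compat, pow_lt; lra);
  unfold zeros, ones; destruct (c i); simpl; lra.
Qed.

Lemma V_neg b c : 1 < b -> V b (negs c) = / (b - 1) - V b c.
Proof.
  intros Hb. symmetry. apply bval_V; auto. unfold bval.
  rewrite <- V_ones with (b:=b) by auto.
  intros eps He. destruct (CV_minus _ _ _ _ (V_spec b ones Hb) (V_spec b c Hb) eps He) as [N HN].
  exists N. intros n Hn. specialize (HN n Hn). simpl in HN. rewrite <- minus_sum in HN.
  erewrite sum_eq; [exact HN|]. intros i _. unfold negs, ones. assert (b ^ i <> 0) by (apply pow_nonzero; lra).
  destruct (c i); simpl; field; split; lra.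
Qed.

Lemma V_zero_all b e : 1 < b -> V b e = 0 -> forall i, e i = false.
Proof.
  intros Hb H0.
  assert (H : forall i, V b (shift e i) = 0).
  { induction i. rewrite shift0; auto.
    rewrite V_shift in IHi by auto. pose proof (V_bounds b (shift e (S i)) Hb).
    pose proof (digR_bounds (e i)).
    symmetry in IHi. apply divb in IHi; auto. destruct (e i); simpl in *; lra. }
  intro i. specialize (H i). rewrite V_shift in H by auto.
  pose proof (V_bounds b (shift e (S i)) Hb).
  destruct (e i); auto. simpl in H. symmetry in H. apply divb in H; auto. lra.
Qed.

Lemma V_max_all b d : 1 < b -> / (b - 1) <= V b d -> forall i, d i = true.
Proof.
  intros Hb H i. pose proof (V_bounds b d Hb). pose proof (V_neg b d Hb).
  assert (V b (negs d) = 0) by lra.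
  pose proof (V_zero_all b (negs d) Hb H2 i). unfold negs in H3. destruct (d i); auto.
Qed.

Lemma V_prefix b c d j : 1 < b -> (forall i, (i < j)%nat -> c i = d i) ->
  V b c - V b d = (V b (shift c j) - V b (shift d j)) / b ^ j.
Proof.
  intros Hb. induction j; intros H.
  - rewrite !shift0. simpl. field.
  - rewrite IHj by (intros; apply H; lia).
    rewrite (V_shift b c j), (V_shift b d j), H by (auto; lia). simpl.
    field. split; [apply pow_nonzero|]; lra.
Qed.

Lemma V_shift_S b c n : 1 < b ->
  V b (shift c (S n)) = b * V b (shift c n) - digR (c n).
Proof. intros Hb. rewrite (V_shift b c n Hb). field. lra. Qed.

Lemma V_orbit b e (g : nat -> R) : 1 < b ->
  (forall n, 0 <= g n <= / (b - 1)) ->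
  (forall n, g (S n) = b * g n - digR (e n)) -> V b e = g 0%nat.
Proof.
  intros Hb Hg Hr.
  set (D := fun n => V b (shift e n) - g n).
  assert (HD : forall n, D n = b ^ n * D 0%nat).
  { induction n. simpl; ring. unfold D in *. rewrite V_shift_S, Hr by auto. simpl.
    transitivity (b * (V b (shift e n) - g n)); [ring|]. rewrite IHn. ring. }
  assert (HB : forall n, Rabs (D n) <= / (b - 1)).
  { intro n. unfold D. pose proof (V_bounds b (shift e n) Hb). specialize (Hg n).
    apply Rabs_le. lra. }
  destruct (Req_dec (D 0%nat) 0) as [Z|Z].
  - unfold D in Z. rewrite shift0 in Z. lra.
  - exfalso. assert (Hpos : 0 < Rabs (D 0%nat)) by (apply Rabs_pos_lt; auto).
    destruct (Pow_x_infinity b ltac:(rewrite Rabs_right; lra) (/(b-1) / Rabs (D 0%nat) + 1)) as [N HN].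
    specialize (HN N (le_n N)). specialize (HB N). rewrite HD, Rabs_mult in HB.
    rewrite Rabs_right in HN, HB by (apply Rle_ge, pow_le; lra).
    assert (b ^ N * Rabs (D 0%nat) >= (/ (b - 1) / Rabs (D 0%nat) + 1) * Rabs (D 0%nat)).
    { apply Rle_ge, Rmult_le_compat_r; lra. }
    assert ((/ (b - 1) / Rabs (D 0%nat) + 1) * Rabs (D 0%nat) = / (b-1) + Rabs (D 0%nat)) by (field; lra).
    lra.
Qed.


Fixpoint gorb b y n := match n with O => y | S n =>
  let g := gorb b y n in if Rle_dec (/b) g then b*g - 1 else b*g end.
Definition gdig b y n := if Rle_dec (/b) (gorb b y n) then true else false.

Lemma M_facts b : 1 < b < 2 -> 1 <= / (b - 1) /\ b * / (b - 1) - 1 = / (b - 1).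
Proof. intros Hb. split.
  - rewrite <- Rinv_1 at 1. apply Rinv_le_contravar; lra.
  - field. lra. Qed.

Lemma gdig_V b y : 1 < b < 2 -> 0 <= y <= / (b - 1) -> V b (gdig b y) = y.
Proof.
  intros Hb Hy. change y with (gorb b y 0). apply V_orbit; [lra| |].
  - induction n; [exact Hy|]. simpl. destruct (M_facts b Hb).
    destruct (Rle_dec (/b) (gorb b y n)).
    + split; [|nra]. apply (Rmult_le_compat_l b) in r; [|lra]. rewrite Rinv_r in r; lra.
    + split; [nra|]. apply Rnot_le_lt in n0. apply (Rmult_lt_compat_l b) in n0; [|lra].
      rewrite Rinv_r in n0; lra.
  - intro n. unfold gdig. simpl. destruct (Rle_dec (/b) (gorb b y n)); simpl; ring.
Qed.

Definition splice (c : nat -> bool) n (a : bool) (e : nat -> bool) : nat -> bool :=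
  fun i => if (i <? n)%nat then c i else if (i =? n)%nat then a else e (i - S n)%nat.

Lemma splice_lt c n a e i : (i < n)%nat -> splice c n a e i = c i.
Proof. intros H. unfold splice. apply Nat.ltb_lt in H. rewrite H. auto. Qed.

Lemma splice_V b c n a e : 1 < b -> V b (shift (splice c n a e) n) = (digR a + V b e) / b.
Proof.
  intros Hb. rewrite V_shift by auto.
  replace (shift (splice c n a e) (S n)) with e.
  - unfold splice. rewrite Nat.ltb_irrefl, Nat.eqb_refl. auto.
  - apply functional_extensionality. intro i. unfold shift, splice.
    replace ((S n + i <? n)%nat) with false by (symmetry; apply Nat.ltb_ge; lia).
    replace ((S n + i =? n)%nat) with false by (symmetry; apply Nat.eqb_neq; lia).
    f_equal. lia.
Qed.

Definition Good (b : R) (c : nat -> bool) (n : nat) : Prop :=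
  if c n then / (b - 1) - 1 < V b (shift c (S n)) else V b (shift c (S n)) < 1.

Lemma Ubeta_iff b c : 1 < b < 2 -> (Ubeta b c <-> forall n, Good b c n).
Proof.
  intros Hb. assert (Hb1 : 1 < b) by lra. destruct (M_facts b Hb) as [HM1 HM2]. split.
  - intros [x [Hx Hu]] n. apply bval_V in Hx; auto. subst x.
    unfold Good. apply NNPP. intro Hn.
    pose proof (V_shift b c n Hb1) as Ht.
    pose proof (V_bounds b (shift c (S n)) Hb1) as Hbd.
    set (t := V b (shift c n)) in *.
    assert (Hsp : forall a y, 0 <= y <= / (b - 1) -> t = (digR a + y) / b -> a = c n).
    { intros a y Hy Hty. set (d := splice c n a (gdig b y)).
      assert (Vd : V b d = V b c).
      { assert (E := V_prefix b d c n Hb1 (fun i Hi => splice_lt c n a (gdig b y) i Hi)).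
        unfold d in E. rewrite splice_V, gdig_V in E by auto. fold t in E. rewrite <- Hty in E.
        unfold Rminus in E. rewrite Rplus_opp_r in E. unfold Rdiv in E. rewrite Rmult_0_l in E.
        fold d in E. lra. }
      pose proof (Hu d ltac:(rewrite <- Vd; apply V_spec; auto) n) as Hdn.
      unfold d in Hdn. unfold splice in Hdn. rewrite Nat.ltb_irrefl, Nat.eqb_refl in Hdn. auto. }
    destruct (c n) eqn:Ec.
    + assert (false = true) as Hf; [|discriminate].
      apply (Hsp false (b * t)).
      * rewrite Ht. simpl. split. apply Rmult_le_pos; [lra|]. apply Rmult_le_pos. lra.
        left; apply Rinv_0_lt_compat; lra.
        replace (b * ((1 + V b (shift c (S n))) / b)) with (1 + V b (shift c (S n))) by (field; lra). lra.
      * simpl. field. lra.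
    + assert (true = false) as Hf; [|discriminate].
      apply (Hsp true (b * t - 1)).
      * rewrite Ht. simpl.
        replace (b * ((0 + V b (shift c (S n))) / b) - 1) with (V b (shift c (S n)) - 1) by (field; lra). lra.
      * simpl. field. lra.
  - intros HG. exists (V b c). split; [apply V_spec; auto|].
    intros d Hd. apply bval_V in Hd; auto.
    assert (H : forall n i, (i < n)%nat -> d i = c i).
    { induction n; intros i Hi; [lia|].
      destruct (Nat.eq_dec i n) as [->|Hne]; [|apply IHn; lia].
      assert (E := V_prefix b d c n Hb1 IHn). rewrite <- Hd in E.
      unfold Rminus in E at 1. rewrite Rplus_opp_r in E.
      assert (E2 : V b (shift d n) = V b (shift c n)).
      { assert (0 < b ^ n) by (apply pow_lt; lra).
        apply (Rmult_eq_compat_r (b ^ n)) in E. unfold Rdiv in E.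
        rewrite Rmult_assoc, Rinv_l, Rmult_0_l in E by lra. lra. }
      rewrite (V_shift b d n Hb1), (V_shift b c n Hb1) in E2.
      pose proof (V_bounds b (shift d (S n)) Hb1). pose proof (V_bounds b (shift c (S n)) Hb1).
      specialize (HG n). unfold Good in HG.
      assert (E3 : digR (d n) + V b (shift d (S n)) = digR (c n) + V b (shift c (S n))).
      { apply (Rmult_eq_compat_r b) in E2. unfold Rdiv in E2.
        rewrite !Rmult_assoc, Rinv_l, !Rmult_1_r in E2 by lra. exact E2. }
      destruct (d n), (c n); simpl in *; auto; lra. }
    intro n. apply (H (S n)). lia.
Qed.


Lemma frac_01 x : 0 <= x < 1 -> frac_part x = x.
Proof. intros H. unfold frac_part, Int_part.
  rewrite <- (tech_up x 1) by (simpl; lra). simpl. lra. Qed.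

Lemma frac_12 x : 1 <= x < 2 -> frac_part x = x - 1.
Proof. intros H. unfold frac_part, Int_part.
  rewrite <- (tech_up x 2) by (simpl; lra). simpl. lra. Qed.

Lemma Gmap_facts b z : 1 < b < 2 -> 0 <= z <= / (b - 1) ->
  Gmap b z = b * z - digR (greedy_digit b z) /\ 0 <= Gmap b z <= / (b - 1).
Proof.
  intros Hb Hz. destruct (M_facts b Hb) as [HM1 HM2].
  unfold Gmap, greedy_digit. destruct (Rlt_dec z 1).
  - destruct (Rle_dec 1 (b * z)); simpl.
    + rewrite frac_12 by nra. split; [auto|nra].
    + rewrite frac_01 by nra. split; [ring|nra].
  - simpl. split; [auto|nra].
Qed.

Definition y1 b n := Nat.iter n (Gmap b) 1.

Lemma y1_bounds b n : 1 < b < 2 -> 0 <= y1 b n <= / (b - 1).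
Proof. intros Hb. destruct (M_facts b Hb). induction n; [simpl; lra|].
  change (y1 b (S n)) with (Gmap b (y1 b n)). apply Gmap_facts; auto. Qed.

Lemma V_greedy b k : 1 < b < 2 -> V b (shift (greedy1 b) k) = y1 b k.
Proof.
  intros Hb. replace (y1 b k) with ((fun n => y1 b (k + n)) 0%nat) by (simpl; f_equal; lia).
  apply (V_orbit b _ (fun n => y1 b (k + n))); [lra| intro; apply y1_bounds; auto |].
  intro n. rewrite Nat.add_succ_r. change (y1 b (S (k + n))) with (Gmap b (y1 b (k+n))).
  apply Gmap_facts; auto. apply y1_bounds; auto.
Qed.

Lemma eta_facts b eta : 1 < b < 2 -> 1 < b * (b - 1) -> quasi_greedy1 b eta ->
  V b eta = 1 /\ (forall k, V b (shift eta k) = / b * / (b - 1) -> eta k = true).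
Proof.
  intros Hb Hphi Hq. assert (Hb1 : 1 < b) by lra. destruct (M_facts b Hb) as [HM1 HM2].
  assert (Hr1 : / b * / (b - 1) < 1).
  { rewrite <- Rinv_mult. rewrite <- Rinv_1. apply Rinv_lt_contravar; lra. }
  assert (Hg0 : V b (greedy1 b) = 1).
  { rewrite <- (shift0 (greedy1 b)). rewrite V_greedy; auto. }
  destruct Hq as [[_ He] | [m [Hm1 [Hm2 He]]]].
  - assert (E : eta = greedy1 b) by (apply functional_extensionality; auto). subst eta.
    split; auto. intros k Hk. rewrite V_greedy in Hk by auto.
    unfold greedy1. fold (y1 b k). rewrite Hk. unfold greedy_digit.
    destruct (Rlt_dec (/ b * / (b - 1)) 1); [|lra].
    destruct (Rle_dec 1 (b * (/ b * / (b - 1)))); auto. exfalso. apply n.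
    replace (b * (/ b * / (b - 1))) with (/ (b - 1)) by (field; lra). lra.
  - assert (Hper : shift eta (S m) = eta).
    { apply functional_extensionality. intro i. unfold shift. rewrite !He.
      replace (S m + i)%nat with (i + 1 * S m)%nat by lia. rewrite Nat.Div0.mod_add. auto. }
    assert (Hlt : forall i, (i < m)%nat -> eta i = greedy1 b i).
    { intros i Hi. rewrite He. rewrite Nat.mod_small by lia.
      replace (i =? m)%nat with false by (symmetry; apply Nat.eqb_neq; lia). auto. }
    assert (Hem : eta m = false).
    { rewrite He. rewrite Nat.mod_small by lia. rewrite Nat.eqb_refl. auto. }
    split.
    + pose proof (V_prefix b eta (greedy1 b) m Hb1 Hlt) as E.
      rewrite (V_shift b eta m Hb1), (V_shift b (greedy1 b) m Hb1), Hper, Hem, Hm1, Hg0 in E.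
      replace (shift (greedy1 b) (S m)) with zeros in E.
      2:{ apply functional_extensionality. intro i. unfold shift, zeros. symmetry. apply Hm2. lia. }
      rewrite V_zeros in E by auto. simpl in E.
      assert (Hp : 1 < b * b ^ m).
      { assert (1 <= b ^ m) by (apply pow_R1_Rle; lra). nra. }
      set (v := V b eta) in *.
      assert (E2 : (v - 1) * (b * b ^ m) = v - 1).
      { apply (Rmult_eq_compat_r (b * b ^ m)) in E. rewrite E. field. repeat split; try lra; apply pow_nonzero; lra. }
      assert ((v - 1) * (b * b ^ m - 1) = 0) by lra.
      apply Rmult_integral in H. lra.
    + intros k Hk. destruct (eta k) eqn:Ek; auto. exfalso.
      rewrite V_shift, Ek in Hk by auto. simpl in Hk.
      assert (Hk2 : / (b - 1) <= V b (shift eta (S k))).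
      { symmetry in Hk. apply divb in Hk; auto. rewrite <- (Rmult_1_l (V b (shift eta (S k)))).
        replace (/ (b - 1)) with (b * (/ b * / (b - 1))) by (field; lra). lra. }
      pose proof (V_max_all b _ Hb1 Hk2 (m + S k * S m - S k)%nat) as Ht.
      unfold shift in Ht. replace (S k + (m + S k * S m - S k))%nat with (m + S k * S m)%nat in Ht by nia.
      rewrite He, Nat.Div0.mod_add, Nat.mod_small, Nat.eqb_refl in Ht by lia. discriminate.
Qed.


Fixpoint win (c : nat -> bool) (p len : nat) : list bool :=
  match len with O => nil | S l => c p :: win c (S p) l end.

Fixpoint lexlt (u v : list bool) : bool :=
  match u, v with
  | a :: u', x :: v' => (negb a && x) || (Bool.eqb a x && lexlt u' v')
  | _, _ => false
  end.

Lemma lexlt_true w e p q len : lexlt (win w p len) (win e q len) = true ->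
  exists j, (j < len)%nat /\ (forall i, (i < j)%nat -> w (p + i)%nat = e (q + i)%nat) /\
    w (p + j)%nat = false /\ e (q + j)%nat = true.
Proof.
  revert p q. induction len; intros p q H; simpl in H; [discriminate|].
  destruct (w p) eqn:Ew, (e q) eqn:Eq; simpl in H.
  - destruct (IHlen _ _ H) as [j [Hj [Ha [Hw He]]]]. exists (S j). split; [lia|]. split.
    + intros i Hi. destruct i. rewrite !Nat.add_0_r; congruence.
      replace (p + S i)%nat with (S p + i)%nat by lia. replace (q + S i)%nat with (S q + i)%nat by lia.
      apply Ha; lia.
    + replace (p + S j)%nat with (S p + j)%nat by lia. replace (q + S j)%nat with (S q + j)%nat by lia. auto.
  - discriminate.
  - exists 0%nat. rewrite !Nat.add_0_r. split; [lia|]. split; [intros; lia|auto].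
  - destruct (IHlen _ _ H) as [j [Hj [Ha [Hw He]]]]. exists (S j). split; [lia|]. split.
    + intros i Hi. destruct i. rewrite !Nat.add_0_r; congruence.
      replace (p + S i)%nat with (S p + i)%nat by lia. replace (q + S i)%nat with (S q + i)%nat by lia.
      apply Ha; lia.
    + replace (p + S j)%nat with (S p + j)%nat by lia. replace (q + S j)%nat with (S q + j)%nat by lia. auto.
Qed.

Lemma lexlt_false w e p q len : lexlt (win w p len) (win e q len) = false ->
  (forall i, (i < len)%nat -> w (p + i)%nat = e (q + i)%nat) \/
  exists j, (j < len)%nat /\ (forall i, (i < j)%nat -> w (p + i)%nat = e (q + i)%nat) /\
    w (p + j)%nat = true /\ e (q + j)%nat = false.
Proof.
  revert p q. induction len; intros p q H; simpl in H; [left; intros; lia|].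
  assert (Hs : forall i, (p + S i = S p + i)%nat /\ (q + S i = S q + i)%nat) by (intros; lia).
  destruct (w p) eqn:Ew, (e q) eqn:Eq; simpl in H.
  - destruct (IHlen _ _ H) as [Ha | [j [Hj [Ha [Hw He]]]]].
    + left. intros i Hi. destruct i. rewrite !Nat.add_0_r; congruence.
      destruct (Hs i) as [-> ->]. apply Ha; lia.
    + right. exists (S j). split; [lia|]. split.
      * intros i Hi. destruct i. rewrite !Nat.add_0_r; congruence.
        destruct (Hs i) as [-> ->]. apply Ha; lia.
      * destruct (Hs j) as [-> ->]. auto.
  - right. exists 0%nat. rewrite !Nat.add_0_r. split; [lia|]. split; [intros; lia|auto].
  - discriminate.
  - destruct (IHlen _ _ H) as [Ha | [j [Hj [Ha [Hw He]]]]].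
    + left. intros i Hi. destruct i. rewrite !Nat.add_0_r; congruence.
      destruct (Hs i) as [-> ->]. apply Ha; lia.
    + right. exists (S j). split; [lia|]. split.
      * intros i Hi. destruct i. rewrite !Nat.add_0_r; congruence.
        destruct (Hs i) as [-> ->]. apply Ha; lia.
      * destruct (Hs j) as [-> ->]. auto.
Qed.

Lemma lexlt_ones w e p q len : (forall i, (i < len)%nat -> w (p + i)%nat = true) ->
  lexlt (win w p len) (win e q len) = false.
Proof.
  intros H. destruct (lexlt _ _) eqn:E; auto.
  destruct (lexlt_true _ _ _ _ _ E) as [j [Hj [_ [Hw _]]]]. rewrite H in Hw; auto.
Qed.

Lemma win_shift c p q len : win (shift c p) q len = win c (p + q) len.
Proof. revert q. induction len; intros q; simpl; auto. rewrite IHlen.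
  replace (p + S q)%nat with (S (p + q)) by lia. reflexivity. Qed.

Definition Hyp b eta k : Prop :=
  1 < b < 2 /\ 1 < b * (b - 1) /\ V b eta = 1 /\ eta k = true /\ eta 0%nat = true /\
  V b (shift eta k) = / b * / (b - 1) /\
  forall j, (1 <= j < k)%nat -> ~ (/ b <= V b (shift eta j) <= / b * / (b - 1)).

Lemma diff_1 b eta w j : 1 < b -> V b eta = 1 -> (forall i, (i < j)%nat -> w i = eta i) ->
  V b (shift w j) - V b (shift eta j) = b ^ j * (V b w - 1).
Proof.
  intros Hb HV H. rewrite <- HV. rewrite (V_prefix b w eta j Hb H). field.
  apply pow_nonzero; lra.
Qed.

Lemma core2 b eta k w : Hyp b eta k -> 1 <= V b w ->
  lexlt (win w 0 (S k)) (win eta 0 (S k)) = true ->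
  w k = false /\ forall i, w (S k + i)%nat = true.
Proof.
  intros (Hb & Hphi & HV & Hk & H0 & Hqk & Hq) Hw Hl.
  assert (Hb1 : 1 < b) by lra. destruct (M_facts b Hb) as [HM1 HM2].
  destruct (lexlt_true _ _ _ _ _ Hl) as [j [Hj [Ha [Hwj Hej]]]]. simpl in Ha, Hwj, Hej.
  pose proof (diff_1 b eta w j Hb1 HV Ha) as D.
  assert (0 < b ^ j) by (apply pow_lt; lra).
  assert (Hge : V b (shift eta j) <= V b (shift w j)) by nra.
  rewrite (V_shift b w j Hb1), Hwj in Hge. simpl in Hge.
  pose proof (V_bounds b (shift w (S j)) Hb1).
  assert (Hr : (0 + V b (shift w (S j))) / b <= / b * / (b - 1)).
  { unfold Rdiv. rewrite Rmult_comm. apply Rmult_le_compat_l; [left; apply Rinv_0_lt_compat|]; lra. }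
  destruct (Nat.eq_dec j k) as [->|Hjk].
  - split; auto. intro i. rewrite Hqk in Hge.
    assert (/ (b - 1) <= V b (shift w (S k))).
    { apply (Rmult_le_compat_l b) in Hge; [|lra].
      replace (b * (/ b * / (b - 1))) with (/ (b - 1)) in Hge by (field; lra).
      replace (b * ((0 + V b (shift w (S k))) / b)) with (V b (shift w (S k))) in Hge by (field; lra). auto. }
    apply (V_max_all b _ Hb1 H2 i).
  - exfalso. destruct j as [|j].
    + rewrite shift0, HV in Hge. assert (/ b * / (b - 1) < 1).
      { rewrite <- Rinv_mult. rewrite <- Rinv_1. apply Rinv_lt_contravar; lra. } lra.
    + apply (Hq (S j)); [lia|]. split; [|lra].
      rewrite (V_shift b eta (S j) Hb1), Hej. simpl.
      pose proof (V_bounds b (shift eta (S (S j))) Hb1).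
      unfold Rdiv. rewrite Rmult_comm. rewrite <- (Rmult_1_r (/b)) at 1.
      apply Rmult_le_compat_l; [left; apply Rinv_0_lt_compat|]; lra.
Qed.

Lemma core1 b eta k w : Hyp b eta k -> V b w < 1 ->
  (w k = true -> / (b - 1) - 1 < V b (shift w (S k))) ->
  lexlt (win w 0 (S k)) (win eta 0 (S k)) = true.
Proof.
  intros (Hb & Hphi & HV & Hk & H0 & Hqk & Hq) Hw Hg.
  assert (Hb1 : 1 < b) by lra. destruct (M_facts b Hb) as [HM1 HM2].
  destruct (lexlt _ _) eqn:Hl; auto. exfalso.
  destruct (lexlt_false _ _ _ _ _ Hl) as [Ha | [j [Hj [Ha [Hwj Hej]]]]]; simpl in *.
  - assert (Hk' : w k = true) by (rewrite Ha; auto).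
    pose proof (diff_1 b eta w k Hb1 HV (fun i Hi => Ha i ltac:(lia))) as D.
    assert (0 < b ^ k) by (apply pow_lt; lra).
    assert (Hlt : V b (shift w k) < V b (shift eta k)) by nra.
    specialize (Hg Hk'). rewrite (V_shift b w k Hb1), Hk', Hqk in Hlt. simpl in Hlt.
    apply (Rmult_lt_compat_l b) in Hlt; [|lra].
    replace (b * (/ b * / (b - 1))) with (/ (b - 1)) in Hlt by (field; lra).
    replace (b * ((1 + V b (shift w (S k))) / b)) with (1 + V b (shift w (S k))) in Hlt by (field; lra).
    lra.
  - pose proof (diff_1 b eta w j Hb1 HV Ha) as D.
    assert (0 < b ^ j) by (apply pow_lt; lra).
    assert (Hlt : V b (shift w j) < V b (shift eta j)) by nra.
    destruct j as [|j]; [congruence|].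
    destruct (Nat.eq_dec (S j) k) as [Hjk|Hjk]; [subst k; congruence|].
    assert (Hle : V b (shift eta (S j)) <= / b * / (b - 1)).
    { rewrite (V_shift b eta (S j) Hb1), Hej. simpl.
      pose proof (V_bounds b (shift eta (S (S j))) Hb1).
      unfold Rdiv. rewrite Rmult_comm. apply Rmult_le_compat_l; [left; apply Rinv_0_lt_compat|]; lra. }
    rewrite (V_shift b w (S j) Hb1), Hwj in Hlt. simpl in Hlt.
    pose proof (V_bounds b (shift w (S (S j))) Hb1).
    apply (Hq (S j)); [lia|]. split; auto.
    left. eapply Rle_lt_trans; [|exact Hlt].
    unfold Rdiv. rewrite <- (Rmult_1_l (/b)) at 1. apply Rmult_le_compat_r; [left; apply Rinv_0_lt_compat|]; lra.
Qed.


Definition Win (b : R) (eta : nat -> bool) (k : nat) (c : nat -> bool) (n : nat) : Prop :=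
  (c n = false -> lexlt (win c (S n) (S k)) (win eta 0 (S k)) = true) /\
  (c n = true -> lexlt (win (negs c) (S n) (S k)) (win eta 0 (S k)) = true).

Lemma win_sh c p len : win c p len = win (shift c p) 0 len.
Proof. rewrite win_shift. f_equal. lia. Qed.

Lemma V_shift_neg b c p : 1 < b -> V b (shift (negs c) p) = / (b - 1) - V b (shift c p).
Proof. intros Hb. change (shift (negs c) p) with (negs (shift c p)). apply V_neg; auto. Qed.

Lemma good_win b eta k c : Hyp b eta k ->
  (forall n, Good b c n) <-> (forall n, Win b eta k c n).
Proof.
  intros HH. pose proof HH as (Hb & _). assert (Hb1 : 1 < b) by lra. split.
  - intros HG n. split; intros Hc.
    + rewrite win_sh. apply (core1 b eta k); auto.
      * specialize (HG n). unfold Good in HG. rewrite Hc in HG. auto.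
      * intros Hw. rewrite shift_shift. specialize (HG (S n + k)%nat). unfold Good in HG.
        unfold shift in Hw. rewrite Hw in HG. replace (S n + S k)%nat with (S (S n + k)) by lia. auto.
    + rewrite win_sh. apply (core1 b eta k); auto.
      * specialize (HG n). unfold Good in HG. rewrite Hc in HG. rewrite V_shift_neg; auto. lra.
      * intros Hw. rewrite shift_shift, V_shift_neg by auto. specialize (HG (S n + k)%nat). unfold Good in HG.
        unfold shift, negs in Hw. destruct (c (S n + k)%nat); simpl in Hw; [discriminate|].
        replace (S n + S k)%nat with (S (S n + k)) by lia. lra.
  - intros HW n. unfold Good. destruct (c n) eqn:Hc.
    + apply Rnot_le_lt. intro Hle. destruct (HW n) as [_ H]. specialize (H Hc).
      rewrite win_sh in H. apply (core2 b eta k) in H; auto.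
      2:{ rewrite V_shift_neg; auto. lra. }
      destruct H as [H1 H2]. destruct (HW (S n + k)%nat) as [_ H].
      unfold shift, negs in H1. destruct (c (S n + k)%nat) eqn:E; simpl in H1; [|discriminate].
      specialize (H eq_refl). rewrite lexlt_ones in H; [discriminate|].
      intros i Hi. specialize (H2 i). unfold shift in H2. unfold negs.
      replace (S (S n + k) + i)%nat with (S n + (S k + i))%nat by lia. exact H2.
    + apply Rnot_le_lt. intro Hle. destruct (HW n) as [H _]. specialize (H Hc).
      rewrite win_sh in H. apply (core2 b eta k) in H; auto.
      destruct H as [H1 H2]. destruct (HW (S n + k)%nat) as [H _].
      unfold shift in H1. specialize (H H1). rewrite lexlt_ones in H; [discriminate|].
      intros i Hi. specialize (H2 i). unfold shift in H2.
      replace (S (S n + k) + i)%nat with (S n + (S k + i))%nat by lia. exact H2.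
Qed.

Fixpoint allw n : list (list bool) :=
  match n with O => nil :: nil | S n => map (cons false) (allw n) ++ map (cons true) (allw n) end.

Lemma allw_in u : In u (allw (length u)).
Proof. induction u as [|a u IH]; simpl; auto. apply in_or_app.
  destruct a; [right|left]; apply in_map; auto. Qed.

Lemma allw_len n u : In u (allw n) -> length u = n.
Proof. revert u. induction n; intros u H; simpl in H.
  - destruct H as [<-|[]]; auto.
  - apply in_app_or in H. destruct H as [H|H]; apply in_map_iff in H; destruct H as [v [<- Hv]];
    simpl; f_equal; auto. Qed.

Lemma occurs_win w c p : occurs_at w c p <-> win c p (length w) = w.
Proof.
  revert p. induction w as [|x w IH]; intros p; simpl.
  - split; auto. intros _ i Hi. simpl in Hi. lia.
  - split.
    + intros H. f_equal.
      * specialize (H 0%nat ltac:(simpl; lia)). rewrite Nat.add_0_r in H. auto.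
      * apply IH. intros i Hi. specialize (H (S i) ltac:(simpl; lia)).
        replace (S p + i)%nat with (p + S i)%nat by lia. auto.
    + intros H. injection H as H1 H2. intros i Hi. destruct i.
      * rewrite Nat.add_0_r. auto.
      * simpl. replace (p + S i)%nat with (S p + i)%nat by lia. apply IH; auto. simpl in Hi. lia.
Qed.

Lemma win_len c p len : length (win c p len) = len.
Proof. revert p. induction len; intros p; simpl; auto. Qed.

Lemma map_negb_win c p len : map negb (win c p len) = win (negs c) p len.
Proof. revert p. induction len; intros p; simpl; auto. rewrite IHlen. auto. Qed.

Lemma map_negb_negb (u : list bool) : map negb (map negb u) = u.
Proof. induction u; simpl; auto. rewrite IHu, Bool.negb_involutive. auto. Qed.

Definition Fw eta k : list (list bool) :=
  let B := filter (fun u => negb (lexlt u (win eta 0 (S k)))) (allw (S k)) in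
  map (cons false) B ++ map (fun u => true :: map negb u) B.

Lemma Fw_iff b eta k c :
  (forall n, Win b eta k c n) <-> (forall w, In w (Fw eta k) -> forall p, ~ occurs_at w c p).
Proof.
  split.
  - intros HW w Hw p Ho. unfold Fw in Hw. apply in_app_or in Hw.
    destruct Hw as [Hw|Hw]; apply in_map_iff in Hw; destruct Hw as [u [<- Hu]];
    apply filter_In in Hu; destruct Hu as [Hu Hl]; apply allw_len in Hu;
    apply occurs_win in Ho; simpl in Ho; injection Ho as Hc Hwin.
    + destruct (HW p) as [H _]. rewrite Hu in Hwin. rewrite <- Hwin, (H Hc) in Hl. discriminate.
    + destruct (HW p) as [_ H]. rewrite length_map, Hu in Hwin.
      rewrite <- map_negb_win, Hwin, map_negb_negb in H. rewrite (H Hc) in Hl. discriminate.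
  - intros HF n. split; intros Hc; destruct (lexlt _ _) eqn:E; auto; exfalso.
    + apply (HF (false :: win c (S n) (S k))) with (p := n).
      * unfold Fw. apply in_or_app. left. apply in_map. apply filter_In. split.
        -- pose proof (allw_in (win c (S n) (S k))). rewrite win_len in H. auto.
        -- rewrite E. auto.
      * apply occurs_win. simpl. rewrite win_len, Hc. reflexivity.
    + apply (HF (true :: map negb (win (negs c) (S n) (S k)))) with (p := n).
      * unfold Fw. apply in_or_app. right. apply (in_map (fun u => true :: map negb u)). apply filter_In. split.
        -- pose proof (allw_in (win (negs c) (S n) (S k))). rewrite win_len in H. auto.
        -- rewrite E. auto.
      * apply occurs_win. rewrite map_negb_win. simpl. rewrite win_len, Hc.
        replace (negs (negs c)) with c; auto.
        apply functional_extensionality. intro i. unfold negs. rewrite Bool.negb_involutive. auto.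
Qed.


Theorem lemma3p8 (beta : R) (eta : nat -> bool) :
  (1 + sqrt 5) / 2 < beta < 2 ->
  quasi_greedy1 beta eta ->
  (exists k : nat, (1 <= k)%nat /\
     Qorb beta eta k (/ beta * / (beta - 1)) /\
     (forall i q, (1 <= i < k)%nat -> Qorb beta eta i q ->
        ~ (/ beta <= q <= / beta * / (beta - 1)))) ->
  is_SFT (Ubeta beta).
Proof.
  intros Hbeta Hq [k [Hk1 [Hqk Hi]]].
  pose proof (sqrt_sqrt 5 ltac:(lra)) as Hs. pose proof (sqrt_pos 5) as Hs0.
  assert (Hs1 : 1 < sqrt 5) by nra.
  assert (Hb : 1 < beta < 2) by lra.
  assert (Hphi : 1 < beta * (beta - 1)) by nra.
  assert (Hb1 : 1 < beta) by lra.
  destruct (eta_facts beta eta Hb Hphi Hq) as [HV Hek].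
  apply bval_V in Hqk; auto. symmetry in Hqk. change (fun j => eta (k + j)%nat) with (shift eta k) in Hqk.
  assert (HH : Hyp beta eta k).
  { unfold Hyp. refine (conj Hb (conj Hphi (conj HV (conj _ (conj _ (conj Hqk _)))))).
    - apply Hek. auto.
    - destruct (eta 0%nat) eqn:E; auto. exfalso.
      pose proof (V_step beta eta Hb1) as H. rewrite E in H. simpl in H.
      pose proof (V_bounds beta (shift eta 1) Hb1).
      assert (/ beta * / (beta - 1) < 1).
      { rewrite <- Rinv_mult. rewrite <- Rinv_1. apply Rinv_lt_contravar; lra. }
      assert ((0 + V beta (shift eta 1)) / beta <= / beta * / (beta - 1)).
      { unfold Rdiv. rewrite Rmult_comm. apply Rmult_le_compat_l; [left; apply Rinv_0_lt_compat|]; lra. }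
      lra.
    - intros j Hj. apply (Hi j); auto. apply V_spec; auto. }
  exists (Fw eta k). intro c.
  rewrite Ubeta_iff by auto. rewrite (good_win beta eta k c HH). apply Fw_iff.
Qed.
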